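(* Let $n\ge2$, $\kappa>0$, and let $\tilde\theta:\mathbb R\to[0,\infty)$ be locally Lipschitz and nondecreasing with $\tilde\theta(s)=0$ for $s\le 0$ and $\tilde\theta(s)>0$ for $s>0$; set $\theta(a,b)=\tilde\theta(\min(a,b))$. Let $\rho:[0,\infty)\to\mathbb R^n$ be the solution of $$\frac{d\rho_j}{dt}=\kappa\sum_{k=1}^n\theta(\rho_j,\rho_k)(\rho_j-\rho_k),\qquad j=1,\dots,n,$$ with $\rho(0)\in\mathcal P$ satisfying $\rho_1(0)>\max_{1<j\le n}\rho_j(0)$. Then for all $t\ge0$, $$\rho_1(t)-\max_{1<j\le n}\rho_j(t)\ \ge\ \rho_1(0)-\max_{1<j\le n}\rho_j(0).$$
   Context: $\mathcal P=\{\rho\in\mathbb R^n:\rho_i\ge0\ \forall i,\ \sum_{i=1}^n\rho_i=1\}$ denotes the probability simplex. *)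

(* Defs.v *)
From HB Require Import structures.
From mathcomp Require Import all_boot all_order all_algebra.
From mathcomp Require Import all_classical all_reals all_analysis.
Set Implicit Arguments. Unset Strict Implicit. Unset Printing Implicit Defensive.
Import Order.TTheory GRing.Theory Num.Theory.
Import numFieldNormedType.Exports.
Local Open Scope ring_scope.
Local Open Scope classical_set_scope.

Definition locally_lipschitz (R : realType) (f : R -> R) : Prop :=
  forall x : R, exists2 d : R, 0 < d & exists L : R, forall y z : R,
    `|y - x| < d -> `|z - x| < d -> `|f y - f z| <= L * `|y - z|.

Definition in_simplex (R : realType) (n : nat) (p : 'I_n -> R) : Prop :=
  (forall i, 0 <= p i) /\ \sum_(i < n) p i = 1.

Definition theta (R : realType) (tht : R -> R) (a b : R) : R := tht (Num.min a b).

(* indices "1" and "2" of {1,...,n} are the ordinals 0 and 1 of 'I_n *)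
Definition idx1 (n : nat) (hn : (2 <= n)%N) : 'I_n := @Ordinal n 0 (ltn_trans (ltnSn 0) hn).
Definition idx2 (n : nat) (hn : (2 <= n)%N) : 'I_n := @Ordinal n 1 hn.

(* max_{1 < j <= n} v_j  (nonempty range since n >= 2; idx2 is in it) *)
Definition max_others (R : realType) (n : nat) (hn : (2 <= n)%N) (v : 'I_n -> R) : R :=
  \big[Num.max/v (idx2 hn)]_(j | j != idx1 hn) v j.

(* Main.v *)
Require Import Defs.
From HB Require Import structures.
From mathcomp Require Import all_boot all_order all_algebra.
From mathcomp Require Import all_classical all_reals all_analysis.
From mathcomp Require Import ring lra.
Import Order.TTheory GRing.Theory Num.Theory.
Import numFieldNormedType.Exports.
Local Open Scope ring_scope.
Local Open Scope classical_set_scope.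
Lemma within_ex (R : realType) (P : R -> Prop) (A : set R) x :
  (\forall y \near within A (nbhs x), P y) ->
  exists2 d : R, 0 < d & forall y, A y -> `|x - y| < d -> P y.
Proof.
rewrite /within => /nbhs_ballP [d d0 H]; exists d => // y Ay xy.
by apply: H.
Qed.

Lemma core (R : realType) (D : R -> R) (c e t : R) :
  (forall x : R, 0 <= x -> D @ within [set y | 0 <= y] (nbhs x) --> D x) ->
  D 0 = c -> 0 < e -> 0 <= t ->
  (forall s : R, 0 < s -> s <= t -> (forall u : R, 0 <= u -> u < s -> c - e * (1 + u) < D u) ->
     D s = c - e * (1 + s) -> False) ->
  c - e * (1 + t) < D t.
Proof.
move=> Dc D0 e0 t0 Hkey; rewrite ltNge; apply/negP => Dt.
pose h u := D u - c + e * (1 + u).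
have hc : forall x : R, 0 <= x -> h @ within [set y | 0 <= y] (nbhs x) --> h x.
  move=> x x0; apply: cvgD; first by apply: cvgB; [exact: Dc|exact: cvg_cst].
  apply: cvgM; first exact: cvg_cst.
  by apply: cvgD; [exact: cvg_cst|exact: cvg_within].
have hpos : forall x : R, 0 <= x -> 0 < h x -> exists2 d : R, 0 < d &
    forall y : R, 0 <= y -> `|x - y| < d -> 0 < h y.
  move=> x x0 hx; have /cvgrPdist_lt/(_ _ hx) := hc x x0.
  move=> /within_ex [d d0 H]; exists d => // y y0 xy.
  have := H y y0 xy; rewrite ltr_norml => /andP[_]; lra.
have hneg : forall x : R, 0 <= x -> h x < 0 -> exists2 d : R, 0 < d &
    forall y : R, 0 <= y -> `|x - y| < d -> h y < 0.
  move=> x x0 hx; have hx' : 0 < - h x by lra.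
  have /cvgrPdist_lt/(_ _ hx') := hc x x0.
  move=> /within_ex [d d0 H]; exists d => // y y0 xy.
  have := H y y0 xy; rewrite ltr_norml => /andP[]; lra.
pose B := [set u | 0 <= u /\ u <= t /\ h u <= 0].
have Bt : B t by rewrite /B /h /=; split => //; split => //; lra.
have hB : has_inf B by split; [exists t | exists 0 => u [] ].
pose s := inf B.
have sle : forall u : R, B u -> s <= u by move=> u Bu; exact: (ge_inf hB.2).
have s0 : 0 <= s by apply: lb_le_inf; [exists t | move=> u []].
have st : s <= t by exact: sle.
have hle : h s <= 0.
  rewrite leNgt; apply/negP => /(hpos _ s0) [d d0 H].
  have [b Bb bs] := inf_adherent d0 hB.
  have sb := sle _ Bb; case: Bb => b0 [_ hb].
  have : 0 < h b.
    apply: (H b b0); rewrite distrC ger0_norm ?subr_ge0 //; rewrite -/s; lra.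
  lra.
have spos : 0 < s.
  rewrite lt_neqAle s0 andbT; apply/negP => /eqP s0'.
  by move: hle; rewrite -s0' /h D0; lra.
have hlt : forall u : R, 0 <= u -> u < s -> 0 < h u.
  move=> u u0 us; rewrite ltNge; apply/negP => hu.
  have : s <= u by apply: sle; split => //; split => //; lra.
  lra.
have hge : 0 <= h s.
  rewrite leNgt; apply/negP => /(hneg _ s0) [d d0 H].
  pose y := s - Num.min s d / 2.
  have m1 : Num.min s d <= s by rewrite ge_min lexx.
  have m2 : Num.min s d <= d by rewrite ge_min lexx orbT.
  have m3 : 0 < Num.min s d by rewrite lt_min spos d0.
  have : h y < 0.
    apply: H; first by rewrite /y; lra.
    have -> : s - y = Num.min s d / 2 by rewrite /y; ring.
    rewrite ger0_norm; lra.
  have : 0 < h y by apply: hlt; rewrite /y; lra.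
  lra.
apply: (Hkey s spos st) => [u u0 us|].
  by have := hlt u u0 us; rewrite /h; lra.
by move: hle hge; rewrite /h; lra.
Qed.

Lemma deriv_contra (R : realType) (g : R -> R) (s d e : R) :
  is_derive s 1 g d -> 0 <= d -> 0 < s -> 0 < e ->
  (forall u : R, 0 <= u -> u < s -> e * (s - u) < g u - g s) -> False.
Proof.
move=> gd d0 s0 e0 H.
have hc : (fun h : R => h^-1 *: ((g \o shift s) (h *: 1) - g s)) @ 0^' --> d.
  by rewrite -(@derive_val _ _ _ _ _ _ _ gd); exact: (@ex_derive _ _ _ _ _ _ _ gd).
have /cvgrPdist_lt/(_ _ e0) := hc.
move=> /within_ex [r r0 Hr].
set M := Num.min s r.
have m1 : M <= s by rewrite /M ge_min lexx.
have m2 : M <= r by rewrite /M ge_min lexx orbT.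
have m3 : 0 < M by rewrite /M lt_min s0 r0.
clearbody M.
have M2 : 0 < M / 2 by rewrite divr_gt0.
have := Hr (- (M / 2)).
have -> : (- (M / 2))%:A = - (M / 2) :> R by rewrite /GRing.scale /= mulr1.
rewrite oppr_eq0 gt_eqF // sub0r opprK ger0_norm; last lra.
have Mr : M / 2 < r by lra.
move=> /(_ isT Mr) /=.
have u0 : 0 <= - (M / 2) + s by lra.
have us : - (M / 2) + s < s by lra.
have := H _ u0 us.
have -> : s - (- (M / 2) + s) = M / 2 by ring.
set D := g _ - g s => HD.
have q1 : e < D / (M / 2) by rewrite ltr_pdivlMr //; lra.
have -> : (- (M / 2))^-1 *: D = - (D / (M / 2)).
  by rewrite /GRing.scale /= invrN mulNr mulrC.
rewrite ltr_norml => /andP[]; lra.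
Qed.
Lemma bigmax_attained (R : realType) (I : eqType) (r : seq I) (P : pred I) (F : I -> R) x0 :
  \big[Num.max/x0]_(i <- r | P i) F i = x0 \/
  exists2 i, P i && (i \in r) & \big[Num.max/x0]_(i <- r | P i) F i = F i.
Proof.
elim: r => [|i r IH]; first by left; rewrite big_nil.
rewrite big_cons; case: ifP => Pi.
- case: (lerP (F i) (\big[Num.max/x0]_(j <- r | P j) F j)) => Hm.
  + case: IH => [->|[j /andP[Pj jr] ->]]; first by left.
    by right; exists j => //; rewrite Pj in_cons jr orbT.
  + by right; exists i => //; rewrite Pi mem_head.
- case: IH => [->|[j /andP[Pj jr] ->]]; first by left.
  by right; exists j => //; rewrite Pj in_cons jr orbT.
Qed.

Lemma le_bigmax_in (R : realType) (I : eqType) (r : seq I) (P : pred I) (F : I -> R) x0 j :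
  P j -> j \in r -> F j <= \big[Num.max/x0]_(i <- r | P i) F i.
Proof.
elim: r => [|i r IH] //= Pj; rewrite in_cons big_cons => /orP[/eqP <-|jr].
  by rewrite Pj le_max lexx.
by case: ifP => _; rewrite ?le_max IH ?orbT.
Qed.

Lemma cvg_maxF (R : realType) {T} (F : set_system T) {FF : Filter F} (f g : T -> R) a b :
  f @ F --> a -> g @ F --> b ->
  (fun x => Num.max (f x) (g x)) @ F --> Num.max a b.
Proof.
move=> fa gb.
have -> : (fun x => Num.max (f x) (g x)) = (fun x => (f x + g x + `|f x - g x|) / 2).
  by apply/funext => x; rewrite maxr_absE.
rewrite maxr_absE; apply: cvgM; last exact: cvg_cst.
apply: cvgD; first exact: cvgD.
by apply: cvg_norm; apply: cvgB.
Qed.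

Lemma cvg_bigmax (R : realType) {T} (F : set_system T) {FF : Filter F} (I : eqType)
  (r : seq I) (P : pred I) (f : T -> I -> R) (x0 : T -> R) (l : I -> R) l0 :
  (forall i, (fun x => f x i) @ F --> l i) -> x0 @ F --> l0 ->
  (fun x => \big[Num.max/x0 x]_(i <- r | P i) f x i) @ F -->
    \big[Num.max/l0]_(i <- r | P i) l i.
Proof.
move=> fl xl; elim: r => [|i r IH].
  have -> : (fun x => \big[Num.max/x0 x]_(i <- [::] | P i) f x i) = x0.
    by apply/funext => x; rewrite big_nil.
  by rewrite big_nil.
have -> : (fun x => \big[Num.max/x0 x]_(j <- i :: r | P j) f x j) =
  (fun x => if P i then Num.max (f x i) (\big[Num.max/x0 x]_(j <- r | P j) f x j)
            else \big[Num.max/x0 x]_(j <- r | P j) f x j).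
  by apply/funext => x; rewrite big_cons.
rewrite big_cons; case: (P i) => //.
exact: cvg_maxF.
Qed.

Lemma term_ineq (R : realType) (tht : R -> R) (a b x : R) :
  (forall s, 0 <= tht s) -> b < a -> (x <= b \/ x = a) ->
  tht (Num.min b x) * (b - x) <= tht (Num.min a x) * (a - x).
Proof.
move=> t0 ba [xb|->].
- have xa : x <= a by lra.
  case: (lerP a x) => h2; first lra.
  case: (lerP b x) => h1.
    have eb : x = b by lra.
    by rewrite eb subrr mulr0; apply: mulr_ge0 => //; lra.
  by apply: ler_wpM2l => //; lra.
- rewrite subrr mulr0; case: (lerP b a) => h; last lra.
  have := t0 b; nra.
Qed.

Theorem lemma3p4 (R : realType) (n : nat) (hn : (2 <= n)%N) (kappa : R)
  (tht : R -> R) (rho : R -> 'I_n -> R) :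
  0 < kappa ->
  (forall s : R, 0 <= tht s) ->
  locally_lipschitz tht ->
  {homo tht : x y / x <= y} ->
  (forall s : R, s <= 0 -> tht s = 0) ->
  (forall s : R, 0 < s -> 0 < tht s) ->
  (forall j, {within `[0, +oo[, continuous (fun s => rho s j)}) ->
  (forall (j : 'I_n) (t : R), 0 < t -> is_derive t (1 : R) (fun s => rho s j)
      (kappa * \sum_(k < n) theta tht (rho t j) (rho t k) * (rho t j - rho t k))) ->
  in_simplex (rho 0) ->
  rho 0 (idx1 hn) > max_others hn (rho 0) ->
  forall t : R, 0 <= t ->
    rho t (idx1 hn) - max_others hn (rho t) >= rho 0 (idx1 hn) - max_others hn (rho 0).
Proof.
move=> k0 t0 _ _ _ _ Hc Hd _ H0 t tge0.
set i1 := idx1 hn; set i2 := idx2 hn.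
pose D (s : R) := rho s i1 - max_others hn (rho s).
have eqA : (`[0, +oo[ : set R) = [set y | 0 <= y].
  by apply/seteqP; split => y /=; rewrite in_itv /= andbT.
have Hcj : forall (j : 'I_n) (x : R), 0 <= x ->
    (fun s => rho s j) @ within [set y | 0 <= y] (nbhs x) --> rho x j.
  move=> j x x0; have := Hc j; rewrite eqA => /subspace_continuousP; apply.
  by [].
have HcD : forall x : R, 0 <= x -> D @ within [set y | 0 <= y] (nbhs x) --> D x.
  move=> x x0; apply: (cvgB (Hcj i1 x x0)).
  rewrite /max_others; apply: cvg_bigmax => [i|]; exact: (Hcj _ _ x0).
have Hc0 : 0 < D 0 by rewrite /D -/i1 in H0 *; lra.
change (D 0 <= D t).
set c := D 0.
rewrite leNgt; apply/negP => Dt.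
set m := Num.min c (c - D t).
have m1 : m <= c by rewrite /m ge_min lexx.
have m2 : m <= c - D t by rewrite /m ge_min lexx orbT.
have m3 : 0 < m by rewrite /m lt_min Hc0 /=; lra.
clearbody m.
have t1 : 0 < 1 + t by lra.
pose e := m / (2 * (1 + t)).
have e0 : 0 < e by rewrite /e divr_gt0 // mulr_gt0 //.
have em : e * (1 + t) = m / 2 by rewrite /e; field; lra.
clearbody e.
suff : c - e * (1 + t) < D t by lra.
apply: core => //.
move=> s s0 st Hu Ds.
have Dspos : 0 < D s.
  have : e * (1 + s) <= e * (1 + t) by apply: ler_wpM2l; lra.
  lra.
have ub : forall (u : R) (k : 'I_n), k != i1 -> rho u k <= max_others hn (rho u).
  by move=> u k ki; apply: le_bigmax_in => //; exact: mem_index_enum.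
have [j ji Mj] : exists2 j, j != i1 & max_others hn (rho s) = rho s j.
  case: (@bigmax_attained R _ (index_enum 'I_n) (fun j => j != i1) (rho s) (rho s i2)).
    by move=> h; exists i2 => //.
  by move=> [j /andP[ji _] h]; exists j.
pose g := (fun u => rho u i1) - (fun u => rho u j).
have gd := is_deriveB (Hd i1 s s0) (Hd j s s0).
apply: (@deriv_contra R _ s _ e gd _ s0 e0).
  have ba : rho s j < rho s i1 by move: Dspos; rewrite /D Mj; lra.
  rewrite -mulrBr; apply: mulr_ge0; first exact: ltW.
  rewrite subr_ge0; apply: ler_sum => k _; rewrite /theta.
  apply: term_ineq => //.
  case: (eqVneq k i1) => [->|ki]; first by right.
  by left; rewrite -Mj; exact: ub.
move=> u u0 us; rewrite /g /=.
have := Hu u u0 us; have := ub u j ji; rewrite /D Mj in Ds |- *.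
move=> h1 h2; change (e * (s - u) < (rho u i1 - rho u j) - (rho s i1 - rho s j)).
lra.
Qed.
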